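(* Let $K$ be a field of characteristic zero and $W_n=\mathrm{Der}_K(K[x_1^{\pm1},\ldots,x_n^{\pm1}])$. If $\sigma$ is a Lie algebra automorphism of $W_n$ with $\sigma(\partial_i)=\partial_i$ for all $i=1,\ldots,n$, then $\sigma$ is the identity.
   Context: $\partial_i=\partial/\partial x_i$. *)

(* Defs.v *)
From HB Require Import structures.
From mathcomp Require Import all_boot all_order all_algebra.
From mathcomp Require Import fraction.
From mathcomp.multinomials Require Import mpoly.
Set Implicit Arguments. Unset Strict Implicit. Unset Printing Implicit Defensive.
Import GRing.Theory.
Local Open Scope ring_scope.

Notation "x %:F" := (@FracField.tofrac _ x) (format "x %:F").

Definition Pol (K : fieldType) (n : nat) := {mpoly K[n]}.
Definition Frac (K : fieldType) (n : nat) := {fraction {mpoly K[n]}}.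

(* The Laurent polynomial ring K[x_1^{+-1},...,x_n^{+-1}], realised as the
   subring of K(x_1..x_n) of elements p / x^m with p a polynomial and
   x^m a monomial. *)
Definition laurent (K : fieldType) (n : nat) (f : Frac K n) : Prop :=
  exists (p : {mpoly K[n]}) (m : 'X_{1..n}), f = p%:F / ('X_[m])%:F.

Definition Laurent (K : fieldType) (n : nat) := {f : Frac K n | laurent f}.

Definition sc (K : fieldType) (n : nat) (a : K) : Frac K n := (a%:MP)%:F.

(* K-linear derivations of the Laurent polynomial ring. Since the ring
   operations of Laurent n are those of Frac, linearity and the Leibniz rule
   are stated through the embedding sval. *)
Definition is_der (K : fieldType) (n : nat) (D : Laurent K n -> Laurent K n) : Prop :=
  (forall (a : K) (f g h : Laurent K n),
      sval h = sc n a * sval f + sval g ->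
      sval (D h) = sc n a * sval (D f) + sval (D g)) /\
  (forall f g h : Laurent K n,
      sval h = sval f * sval g ->
      sval (D h) = sval f * sval (D g) + sval (D f) * sval g).

Definition W (K : fieldType) (n : nat) := {D : Laurent K n -> Laurent K n | is_der D}.

Definition is_lin_comb (K : fieldType) (n : nat) (a : K) (D E H : W K n) : Prop :=
  forall f, sval (sval H f) = sc n a * sval (sval D f) + sval (sval E f).

Definition is_bracket (K : fieldType) (n : nat) (D E H : W K n) : Prop :=
  forall f, sval (sval H f) = sval (sval D (sval E f)) - sval (sval E (sval D f)).

Definition is_partial (K : fieldType) (n : nat) (i : 'I_n) (D : W K n) : Prop :=
  forall (f : Laurent K n) (p : {mpoly K[n]}) (m : 'X_{1..n}),
    sval f = p%:F / ('X_[m])%:F ->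
    sval (sval D f) = (mderiv i p)%:F / ('X_[m])%:F
                    - ((m i)%:R * p)%:F / ('X_[m] * 'X_i)%:F.

Definition lie_aut (K : fieldType) (n : nat) (s : W K n -> W K n) : Prop :=
  bijective s /\
  (forall a D E H, is_lin_comb a D E H -> is_lin_comb a (s D) (s E) (s H)) /\
  (forall D E H, is_bracket D E H -> is_bracket (s D) (s E) (s H)).

(* Main.v *)
Require Import Defs.
From HB Require Import structures.
From mathcomp Require Import all_boot all_order all_algebra.
From mathcomp Require Import fraction.
From mathcomp.multinomials Require Import mpoly.
From mathcomp Require Import ring zify.
From Stdlib Require Import ProofIrrelevance ClassicalEpsilon FunctionalExtensionality.
Set Implicit Arguments. Unset Strict Implicit. Unset Printing Implicit Defensive.
Import GRing.Theory.
Local Open Scope ring_scope.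

Section GF.
Variable (G : fieldType).
Lemma gf_add (p a q b : G) : a != 0 -> b != 0 -> p / a + q / b = (p * b + q * a) / (a * b).
Proof. by move=> ha hb; field; apply/andP. Qed.
Lemma gf_mul (p a q b : G) : a != 0 -> b != 0 -> p / a * (q / b) = (p * q) / (a * b).
Proof. by move=> ha hb; field; apply/andP. Qed.
Lemma gf_div (p a b : G) : a != 0 -> b != 0 -> p / a / b = p / (a * b).
Proof. by move=> ha hb; field; apply/andP. Qed.
Lemma gf_cancel (a u v : G) : a != 0 -> a * u = a * v -> u = v.
Proof. by move=> ha /(congr1 (fun x => a^-1 * x)); rewrite !mulrA mulVf // !mul1r. Qed.
Lemma gf_shift (E Pp Y M a b : G) : Y != 0 -> M != 0 ->
  (E * Y + Pp * (b * Y) - (a + b) * (Pp * Y)) / (M * Y) = (E - a * Pp) / M.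
Proof. by move=> hY hM; field; apply/andP. Qed.
Lemma gf_cross (a b c d : G) : b != 0 -> d != 0 -> a / b = c / d -> a * d = c * b.
Proof.
move=> hb hd h; have -> : a = c / d * b by rewrite -h divfK.
by rewrite mulrAC divfK.
Qed.
Lemma gf_xdfrac (x a b c : G) : x != 0 -> b != 0 -> x * (a / b - c / (b * x)) = (x * a - c) / b.
Proof. by move=> hx hb; field; apply/andP. Qed.
Lemma gf_lin (c e1 e2 a p q M : G) : M != 0 ->
  (c * e1 + e2 - a * (c * p + q)) / M = c * ((e1 - a * p) / M) + (e2 - a * q) / M.
Proof. by move=> hM; field. Qed.
Lemma gf_mulr (e1 e2 p q a b M1 M2 : G) : M1 != 0 -> M2 != 0 ->
  (e1 * q + p * e2 - (a + b) * (p * q)) / (M1 * M2) =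
  p / M1 * ((e2 - b * q) / M2) + (e1 - a * p) / M1 * (q / M2).
Proof. by move=> h1 h2; field; apply/andP. Qed.
Lemma gf_comb (A Pp Q M Kk : G) : M != 0 -> Kk != 0 ->
  A * (Pp / M) + Q / Kk = (A * (Pp * Kk) + Q * M) / (M * Kk).
Proof. by move=> h1 h2; field; apply/andP. Qed.
Lemma gf_cross_inv (a b c d : G) : b != 0 -> d != 0 -> a * d = c * b -> a / b = c / d.
Proof.
move=> hb hd h; apply: (gf_cancel (mulf_neq0 hb hd)).
have -> : b * d * (a / b) = a * d by field.
by rewrite h; field.
Qed.
Lemma gf_k2 (x s d Q M Lm Pp : G) : x != 0 -> M != 0 ->
  x * d = Q / M -> (x + s) * d = Lm * (Pp / M) -> (x + s) * Q = Lm * (Pp * x).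
Proof.
move=> hx hM h1 h2.
have -> : Q = x * d * M by rewrite h1 divfK.
have -> : (x + s) * (x * d * M) = ((x + s) * d) * x * M by ring.
by rewrite h2; field.
Qed.
End GF.

Lemma seq_argmax (T : eqType) (s : seq T) (f : T -> nat) : s != [::] ->
  exists2 x, x \in s & forall y, y \in s -> (f y <= f x)%N.
Proof.
elim: s => [//|a s ih] _.
case: (eqVneq s [::]) => [->|/ih [x xs hx]].
  by exists a; rewrite ?mem_seq1 // => y; rewrite mem_seq1 => /eqP ->.
case: (leqP (f a) (f x)) => h.
  exists x; first by rewrite inE xs orbT.
  by move=> y; rewrite inE => /orP [/eqP ->|/hx].
exists a; first by rewrite inE eqxx.
move=> y; rewrite inE => /orP [/eqP ->//|/hx hy]; exact: (leq_trans hy (ltnW h)).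
Qed.

Lemma seq_argmin (T : eqType) (s : seq T) (f : T -> nat) : s != [::] ->
  exists2 x, x \in s & forall y, y \in s -> (f x <= f y)%N.
Proof.
elim: s => [//|a s ih] _.
case: (eqVneq s [::]) => [->|/ih [x xs hx]].
  by exists a; rewrite ?mem_seq1 // => y; rewrite mem_seq1 => /eqP ->.
case: (leqP (f x) (f a)) => h.
  exists x; first by rewrite inE xs orbT.
  by move=> y; rewrite inE => /orP [/eqP ->|/hx].
exists a; first by rewrite inE eqxx.
move=> y; rewrite inE => /orP [/eqP ->//|/hx hy]; exact: (leq_trans (ltnW h) hy).
Qed.

Section Dev.
Variables (K : fieldType) (n : nat).
Local Notation F := (Frac K n).
Local Notation L := (Laurent K n).
Local Notation P := {mpoly K[n]}.
Local Notation laurent := (@laurent K n).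
Local Notation scK := (@sc K n).

Definition XF (m : 'X_{1..n}) : F := ('X_[m] : P)%:F.
Definition xv (i : 'I_n) : F := XF U_(i)%MM.

Lemma mX_neq0 m : ('X_[m] : P) != 0.
Proof.
apply/eqP => h; have := @mcoeffX n K m m; rewrite h mcoeff0 eqxx => /eqP.
by rewrite eq_sym oner_eq0.
Qed.

Lemma XF_neq0 m : XF m != 0.
Proof. by rewrite /XF tofrac_eq0 mX_neq0. Qed.

Lemma XFD m1 m2 : XF (m1 + m2) = XF m1 * XF m2.
Proof. by rewrite /XF mpolyXD rmorphM. Qed.
Lemma XF0 : XF 0 = 1.
Proof. by rewrite /XF mpolyX0 rmorph1. Qed.

Lemma laurent_poly (p : P) : laurent (p%:F).
Proof. exists p, 0%MM. by rewrite mpolyX0 rmorph1 divr1. Qed.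

Lemma laurent0 : laurent (0 : F).
Proof. by rewrite -tofrac0; apply: laurent_poly. Qed.
Lemma laurent1 : laurent (1 : F).
Proof. by rewrite -tofrac1; apply: laurent_poly. Qed.

Lemma laurentD u v : laurent u -> laurent v -> laurent (u + v).
Proof.
case=> p [m ->] [q [k ->]]; exists (p * 'X_[k] + q * 'X_[m]), (m + k)%MM.
by rewrite mpolyXD !rmorphD !rmorphM /= gf_add //; apply: XF_neq0.
Qed.

Lemma laurentM u v : laurent u -> laurent v -> laurent (u * v).
Proof.
case=> p [m ->] [q [k ->]]; exists (p * q), (m + k)%MM.
by rewrite mpolyXD !rmorphM /= gf_mul //; apply: XF_neq0.
Qed.

Lemma laurentN u : laurent u -> laurent (- u).
Proof. case=> p [m ->]; exists (- p), m; by rewrite rmorphN mulNr. Qed.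

Lemma laurentB u v : laurent u -> laurent v -> laurent (u - v).
Proof. by move=> hu hv; apply: laurentD => //; apply: laurentN. Qed.

Lemma laurent_divX u m : laurent u -> laurent (u / XF m).
Proof.
case=> p [k ->]; exists p, (k + m)%MM.
by rewrite mpolyXD rmorphM /= gf_div //; apply: XF_neq0.
Qed.

Lemma laurent_XF m : laurent (XF m).
Proof. exact: laurent_poly. Qed.
Lemma laurent_sc a : laurent (scK a).
Proof. exact: laurent_poly. Qed.

Lemma laurent_nat k : laurent (k%:R : F).
Proof. by rewrite -(rmorph_nat (@FracField.tofrac _)); apply: laurent_poly. Qed.
Lemma laurent_int z : laurent (z%:~R : F).
Proof. by rewrite -(rmorph_int (@FracField.tofrac _)); apply: laurent_poly. Qed.

Lemma sc1 : scK 1 = 1. Proof. by rewrite /sc mpolyC1 tofrac1. Qed.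
Lemma scN1 : scK (-1) = -1. Proof. by rewrite /sc mpolyCN mpolyC1 tofracN tofrac1. Qed.
Lemma scN a : scK (- a) = - scK a.
Proof. by rewrite /sc mpolyCN tofracN. Qed.
Lemma sc_int z : scK (z%:~R) = z%:~R.
Proof. by rewrite /sc (rmorph_int (mpolyC n (R:=K))) (rmorph_int (@FracField.tofrac _)). Qed.
Lemma sc_nat k : scK (k%:R) = k%:R.
Proof. by rewrite /sc (rmorph_nat (mpolyC n (R:=K))) (rmorph_nat (@FracField.tofrac _)). Qed.

Definition mkL (u : F) (h : laurent u) : L := exist _ u h.

Lemma L_eq (f g : L) : sval f = sval g -> f = g.
Proof. case: f g => [u hu] [v hv] /= e; subst v; f_equal; apply: proof_irrelevance. Qed.

Definition appF (D : L -> L) (u : F) : F :=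
  match excluded_middle_informative (laurent u) with
  | left h => sval (D (exist _ u h)) | right _ => 0 end.

Lemma appFE D (f : L) : appF D (sval f) = sval (D f).
Proof.
rewrite /appF; case: excluded_middle_informative => [h|[]]; last exact: (svalP f).
by congr (sval (D _)); apply: L_eq.
Qed.

Lemma appF_mkL D u (h : laurent u) : appF D u = sval (D (mkL h)).
Proof. exact: (appFE D (mkL h)). Qed.

Lemma appF_laurent D u : laurent (appF D u).
Proof. rewrite /appF; case: excluded_middle_informative => [h|_]; [exact: svalP | exact: laurent0]. Qed.

Section Der.
Variable D : L -> L.
Hypothesis hD : is_der D.

Lemma derL a u v : laurent u -> laurent v ->
  appF D (scK a * u + v) = scK a * appF D u + appF D v.
Proof.
move=> hu hv.
have hw : laurent (scK a * u + v) by apply: laurentD => //; apply: laurentM => //; apply: laurent_sc.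
rewrite (appF_mkL D hw) (appF_mkL D hu) (appF_mkL D hv).
exact: (hD.1 a (mkL hu) (mkL hv) (mkL hw) erefl).
Qed.

Lemma derM u v : laurent u -> laurent v ->
  appF D (u * v) = u * appF D v + appF D u * v.
Proof.
move=> hu hv.
have hw : laurent (u * v) by apply: laurentM.
rewrite (appF_mkL D hw) (appF_mkL D hu) (appF_mkL D hv).
exact: (hD.2 (mkL hu) (mkL hv) (mkL hw) erefl).
Qed.

Lemma der0 : appF D 0 = 0.
Proof.
have := derL 1 laurent0 laurent0; rewrite mulr0 addr0 sc1 mul1r => h.
by apply: (@addrI _ (appF D 0)); rewrite addr0 -h.
Qed.

Lemma derD u v : laurent u -> laurent v -> appF D (u + v) = appF D u + appF D v.
Proof. by move=> hu hv; have := derL 1 hu hv; rewrite sc1 !mul1r. Qed.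

Lemma derZ a u : laurent u -> appF D (scK a * u) = scK a * appF D u.
Proof. by move=> hu; have := derL a hu laurent0; rewrite !addr0 der0 addr0. Qed.

Lemma derN u : laurent u -> appF D (- u) = - appF D u.
Proof. by move=> hu; have := derZ (-1) hu; rewrite scN1 !mulN1r. Qed.

Lemma derB u v : laurent u -> laurent v -> appF D (u - v) = appF D u - appF D v.
Proof. by move=> hu hv; rewrite derD ?derN //; apply: laurentN. Qed.

Lemma der1 : appF D 1 = 0.
Proof.
have := derM laurent1 laurent1; rewrite !mulr1 !mul1r => h.
by apply: (@addrI _ (appF D 1)); rewrite addr0 -h.
Qed.

Lemma derC a : appF D (scK a) = 0.
Proof. by have := derZ a laurent1; rewrite mulr1 der1 mulr0. Qed.

Lemma derZint z u : laurent u -> appF D (z%:~R * u) = z%:~R * appF D u.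
Proof. by move=> hu; rewrite -sc_int derZ. Qed.

Lemma derint z : appF D (z%:~R) = 0.
Proof. by rewrite -sc_int derC. Qed.

Lemma derZnat k u : laurent u -> appF D (k%:R * u) = k%:R * appF D u.
Proof. by move=> hu; rewrite -sc_nat derZ. Qed.
End Der.

Lemma W_eq (D E : W K n) : (forall f : L, sval (sval D f) = sval (sval E f)) -> D = E.
Proof.
move=> h; case: D E h => [d hd] [e he] /= h.
have de : d = e by apply: functional_extensionality => f; apply: L_eq.
subst e; f_equal; apply: proof_irrelevance.
Qed.

Lemma W_eqF (D E : W K n) : (forall u, laurent u -> appF (sval D) u = appF (sval E) u) -> D = E.
Proof. move=> h; apply: W_eq => f; rewrite -!appFE; apply: h; exact: svalP. Qed.


Section Ext.
Variables D E : L -> L.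
Hypotheses (hD : is_der D) (hE : is_der E).
Hypothesis hx : forall i, appF D (xv i) = appF E (xv i).

Definition good u := laurent u /\ appF D u = appF E u.

Lemma goodM u v : good u -> good v -> good (u * v).
Proof.
case=> hu eu [hv ev]; split; first exact: laurentM.
by rewrite (derM hD) // (derM hE) // eu ev.
Qed.

Lemma good1 : good 1.
Proof. by split; [exact: laurent1 | rewrite (der1 hD) (der1 hE)]. Qed.

Lemma goodXF m : good (XF m).
Proof.
rewrite /XF mpolyXE_id rmorph_prod.
apply: (big_ind good); [exact: good1 | exact: goodM | ].
move=> i _; rewrite rmorphXn; elim: (m i) => [|k ih]; first by rewrite expr0; exact: good1.
by rewrite exprS; apply: goodM => //; split; [exact: laurent_XF | exact: hx].
Qed.

Lemma goodP (p : P) : good (p%:F).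
Proof.
elim/mpolyind: p => [|c m p _ _ ih].
  by rewrite tofrac0; split; [exact: laurent0 | rewrite (der0 hD) (der0 hE)].
have -> : (c *: 'X_[m] + p)%:F = scK c * XF m + p%:F by rewrite -mul_mpolyC rmorphD rmorphM.
case: ih => hp ep; case: (goodXF m) => hm em.
split; first by apply: laurentD => //; apply: laurentM => //; exact: laurent_sc.
by rewrite (derL hD) // (derL hE) // em ep.
Qed.

Lemma ext_all u : laurent u -> appF D u = appF E u.
Proof.
case=> p [m ->].
have hu : laurent (p%:F / XF m) by apply: laurent_divX; apply: laurent_poly.
have eu : XF m * (p%:F / XF m) = p%:F by rewrite mulrC divfK // XF_neq0.
have h1 := derM hD (laurent_XF m) hu; have h2 := derM hE (laurent_XF m) hu.
rewrite eu in h1 h2.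
rewrite (proj2 (goodP p)) (proj2 (goodXF m)) in h1.
rewrite h1 in h2; move/addIr: h2; apply: gf_cancel; exact: XF_neq0.
Qed.
End Ext.

Lemma W_ext (D E : W K n) : (forall i, appF (sval D) (xv i) = appF (sval E) (xv i)) -> D = E.
Proof. move=> h; apply: W_eqF => u hu; apply: ext_all => //; exact: svalP. Qed.


Definition eu (i : 'I_n) (p : P) : P := 'X_i * mderiv i p.

Lemma euM i p q : eu i (p * q) = eu i p * q + p * eu i q.
Proof. rewrite /eu mderivM; ring. Qed.
Lemma euD i p q : eu i (p + q) = eu i p + eu i q.
Proof. by rewrite /eu mderivD mulrDr. Qed.
Lemma euC i c p : eu i (c%:MP * p) = c%:MP * eu i p.
Proof. by rewrite /eu mderiv_mulC mulrCA. Qed.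
Lemma euX i m : eu i 'X_[m] = (m i)%:R * 'X_[m].
Proof.
rewrite /eu mderivX -mul_mpolyC mpolyC_nat.
case: (posnP (m i)) => [->|hm]; first by rewrite !mul0r mulr0.
rewrite mulrCA -mpolyXD; congr (_ * 'X_[_]).
rewrite addmC submK //; apply/mnm_lepP => j; rewrite mnm1E.
by case: eqP => [<-|].
Qed.

Definition ef i (p : P) (m : 'X_{1..n}) : F := (eu i p - (m i)%:R * p)%:F / XF m.

Lemma ef_shift i p m k : ef i (p * 'X_[k]) (m + k) = ef i p m.
Proof.
rewrite /ef euM euX mnmDE natrD XFD.
set e := eu i p.
rewrite !(rmorphB, rmorphD, rmorphM, rmorph_nat) -/(XF k).
apply: gf_shift; exact: XF_neq0.
Qed.


Lemma frac_cross (p q : P) m k : p%:F / XF m = q%:F / XF k -> p * 'X_[k] = q * 'X_[m].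
Proof.
move=> /(gf_cross (XF_neq0 m) (XF_neq0 k)) h.
by apply/eqP; rewrite -tofrac_eq !rmorphM; apply/eqP.
Qed.

Lemma ef_welldef i p q m k : p%:F / XF m = q%:F / XF k -> ef i p m = ef i q k.
Proof.
move=> /frac_cross h.
by rewrite -(ef_shift i p m k) h addmC ef_shift.
Qed.

Definition dfrac i (p : P) (m : 'X_{1..n}) : F :=
  (mderiv i p)%:F / ('X_[m])%:F - ((m i)%:R * p)%:F / ('X_[m] * 'X_i)%:F.

Lemma xv_dfrac i p m : xv i * dfrac i p m = ef i p m.
Proof.
rewrite /dfrac /ef /eu [('X_[m] * 'X_i)%:F]rmorphM -/(XF m) -/(xv i) gf_xdfrac ?XF_neq0 //.
by rewrite !(rmorphB, rmorphM).
Qed.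

Lemma dfrac_welldef i p q m k : p%:F / XF m = q%:F / XF k -> dfrac i p m = dfrac i q k.
Proof.
move=> h; apply: (gf_cancel (XF_neq0 U_(i)%MM)).
by rewrite -/(xv i) !xv_dfrac; apply: ef_welldef.
Qed.

Lemma laurent_dfrac i p m : laurent (dfrac i p m).
Proof.
apply: laurentB; first by apply: laurent_divX; apply: laurent_poly.
by rewrite -mpolyXD; apply: laurent_divX; apply: laurent_poly.
Qed.

Definition rep (f : L) : P * 'X_{1..n} :=
  let ex := constructive_indefinite_description _ (svalP f) in
  (sval ex, sval (constructive_indefinite_description _ (svalP ex))).

Lemma repE (f : L) : sval f = (rep f).1%:F / XF (rep f).2.
Proof.
rewrite /rep; case: constructive_indefinite_description => p /= hp.
by case: constructive_indefinite_description.
Qed.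

Definition dL i (f : L) : L := mkL (laurent_dfrac i (rep f).1 (rep f).2).

Lemma dL_spec i (f : L) p m : sval f = p%:F / XF m -> sval (dL i f) = dfrac i p m.
Proof. by move=> h; rewrite /= ; apply: dfrac_welldef; rewrite -repE. Qed.

Lemma ef_lin i c p q m : ef i (c%:MP * p + q) m = scK c * ef i p m + ef i q m.
Proof.
rewrite /ef euD euC /sc.
set e1 := eu i p; set e2 := eu i q.
rewrite !(rmorphB, rmorphD, rmorphM).
apply: gf_lin; exact: XF_neq0.
Qed.

Lemma ef_mul i p q m k :
  ef i (p * q) (m + k) = p%:F / XF m * ef i q k + ef i p m * (q%:F / XF k).
Proof.
rewrite /ef euM mnmDE natrD XFD.
set e1 := eu i p; set e2 := eu i q.
rewrite !(rmorphB, rmorphD, rmorphM).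
apply: gf_mulr; exact: XF_neq0.
Qed.

Lemma dL_der i : is_der (dL i).
Proof.
split.
- move=> a f g h eh.
  case: (svalP f) => p [m ef']; case: (svalP g) => q [k eg].
  have e2 : sval h = (a%:MP * (p * 'X_[k]) + q * 'X_[m])%:F / XF (m + k).
    rewrite eh ef' eg XFD !(rmorphD, rmorphM) -/(XF k) -/(XF m) /sc.
    by apply: gf_comb; exact: XF_neq0.
  rewrite (dL_spec i e2) (dL_spec i ef') (dL_spec i eg).
  apply: (gf_cancel (XF_neq0 U_(i)%MM)); rewrite -/(xv i) xv_dfrac mulrDr [xv i * (_ * _)]mulrCA !xv_dfrac.
  by rewrite ef_lin ef_shift addmC ef_shift.
- move=> f g h eh.
  case: (svalP f) => p [m ef']; case: (svalP g) => q [k eg].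
  have e2 : sval h = (p * q)%:F / XF (m + k).
    by rewrite eh ef' eg XFD rmorphM gf_mul ?XF_neq0.
  rewrite (dL_spec i e2) (dL_spec i ef') (dL_spec i eg) ef' eg.
  apply: (gf_cancel (XF_neq0 U_(i)%MM)); rewrite -/(xv i) xv_dfrac mulrDr [xv i * (_ * _)]mulrCA [xv i * (_ * _)]mulrA !xv_dfrac.
  by rewrite ef_mul.
Qed.

Definition pW i : W K n := exist _ (dL i) (dL_der i).

Lemma pW_partial i : is_partial i (pW i).
Proof. move=> f p m h; exact: dL_spec. Qed.


Local Notation WW := (W K n).
Definition ap (D : WW) (u : F) : F := appF (sval D) u.
Definition cf (D : WW) (k : 'I_n) : F := ap D (xv k).

Lemma apE (D : WW) (f : L) : ap D (sval f) = sval (sval D f).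
Proof. exact: appFE. Qed.
Lemma ap_laurent D u : laurent (ap D u).
Proof. exact: appF_laurent. Qed.

Lemma apL (D : WW) a u v : laurent u -> laurent v -> ap D (scK a * u + v) = scK a * ap D u + ap D v.
Proof. exact: (derL (svalP D)). Qed.
Lemma apM (D : WW) u v : laurent u -> laurent v -> ap D (u * v) = u * ap D v + ap D u * v.
Proof. exact: (derM (svalP D)). Qed.
Lemma apD (D : WW) u v : laurent u -> laurent v -> ap D (u + v) = ap D u + ap D v.
Proof. exact: (derD (svalP D)). Qed.
Lemma apB (D : WW) u v : laurent u -> laurent v -> ap D (u - v) = ap D u - ap D v.
Proof. exact: (derB (svalP D)). Qed.
Lemma apN (D : WW) u : laurent u -> ap D (- u) = - ap D u.
Proof. exact: (derN (svalP D)). Qed.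
Lemma apZ (D : WW) a u : laurent u -> ap D (scK a * u) = scK a * ap D u.
Proof. exact: (derZ (svalP D)). Qed.
Lemma apZint (D : WW) z u : laurent u -> ap D (z%:~R * u) = z%:~R * ap D u.
Proof. exact: (derZint (svalP D)). Qed.
Lemma apZnat (D : WW) k u : laurent u -> ap D (k%:R * u) = k%:R * ap D u.
Proof. exact: (derZnat (svalP D)). Qed.
Lemma apC (D : WW) a : ap D (scK a) = 0.
Proof. exact: (derC (svalP D)). Qed.
Lemma ap0 (D : WW) : ap D 0 = 0.
Proof. exact: (der0 (svalP D)). Qed.
Lemma ap1 (D : WW) : ap D 1 = 0.
Proof. exact: (der1 (svalP D)). Qed.
Lemma apint (D : WW) z : ap D z%:~R = 0.
Proof. exact: (derint (svalP D)). Qed.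
Lemma apnat (D : WW) k : ap D k%:R = 0.
Proof. by rewrite -[k%:R]/((k%:Z)%:~R) apint. Qed.

Lemma WF_eq (D E : WW) : (forall u, laurent u -> ap D u = ap E u) -> D = E.
Proof. exact: W_eqF. Qed.
Lemma Wx_eq (D E : WW) : (forall k, cf D k = cf E k) -> D = E.
Proof. exact: W_ext. Qed.

Definition zeroF (f : L) : L := mkL laurent0.
Lemma zeroF_der : is_der zeroF.
Proof. by split=> [a f g h _ | f g h _] /=; ring. Qed.
Definition zeroW : WW := exist _ zeroF zeroF_der.
Lemma ap_zeroW u : laurent u -> ap zeroW u = 0.
Proof. by move=> hu; rewrite /ap (appF_mkL _ hu). Qed.

Definition mulF (g : L) (D : L -> L) (f : L) : L :=
  mkL (laurentM (svalP g) (svalP (D f))).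
Lemma mulF_der g D : is_der D -> is_der (mulF g D).
Proof.
move=> [h1 h2]; split => /=.
- by move=> a f f' h e; rewrite (h1 a f f' h e); ring.
- by move=> f f' h e; rewrite (h2 f f' h e); ring.
Qed.
Definition mulW (g : L) (D : WW) : WW := exist _ (mulF g (sval D)) (mulF_der g (svalP D)).
Lemma ap_mulW g D u : laurent u -> ap (mulW g D) u = sval g * ap D u.
Proof. by move=> hu; rewrite /ap (appF_mkL _ hu) (appF_mkL (sval D) hu). Qed.

Definition linF (a : K) (D E : L -> L) (f : L) : L :=
  mkL (laurentD (laurentM (laurent_sc a) (svalP (D f))) (svalP (E f))).
Lemma linF_der a D E : is_der D -> is_der E -> is_der (linF a D E).
Proof.
move=> [h1 h2] [k1 k2]; split => /=.
- move=> b f f' h e; rewrite (h1 b f f' h e) (k1 b f f' h e).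
  ring.
- move=> f f' h e; rewrite (h2 f f' h e) (k2 f f' h e).
  ring.
Qed.
Definition linW a (D E : WW) : WW := exist _ (linF a (sval D) (sval E)) (linF_der a (svalP D) (svalP E)).
Lemma ap_linW a D E u : laurent u -> ap (linW a D E) u = scK a * ap D u + ap E u.
Proof. by move=> hu; rewrite /ap !(appF_mkL _ hu). Qed.
Lemma linW_lc a D E : is_lin_comb a D E (linW a D E).
Proof. by move=> f. Qed.

Definition brF (D E : L -> L) (f : L) : L :=
  mkL (laurentB (appF_laurent D (appF E (sval f))) (appF_laurent E (appF D (sval f)))).
Lemma brF_der D E : is_der D -> is_der E -> is_der (brF D E).
Proof.
move=> hD hE; split => /=.
- move=> a f g h e; rewrite e.
  have hf := svalP f; have hg := svalP g.
  have hEf := appF_laurent E (sval f); have hEg := appF_laurent E (sval g).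
  have hDf := appF_laurent D (sval f); have hDg := appF_laurent D (sval g).
  rewrite (derL hE a hf hg) (derL hD a hf hg) (derL hD a hEf hEg) (derL hE a hDf hDg).
  ring.
- move=> f g h e; rewrite e.
  have hf := svalP f; have hg := svalP g.
  have hEf := appF_laurent E (sval f); have hEg := appF_laurent E (sval g).
  have hDf := appF_laurent D (sval f); have hDg := appF_laurent D (sval g).
  rewrite (derM hE hf hg) (derM hD hf hg).
  rewrite (derD hD (laurentM hf hEg) (laurentM hEf hg)) (derD hE (laurentM hf hDg) (laurentM hDf hg)).
  rewrite (derM hD hf hEg) (derM hD hEf hg) (derM hE hf hDg) (derM hE hDf hg).
  ring.
Qed.
Definition brW (D E : WW) : WW := exist _ (brF (sval D) (sval E)) (brF_der (svalP D) (svalP E)).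
Lemma ap_brW D E u : laurent u -> ap (brW D E) u = ap D (ap E u) - ap E (ap D u).
Proof. by move=> hu; rewrite /ap (appF_mkL _ hu). Qed.
Lemma brW_br D E : is_bracket D E (brW D E).
Proof. move=> f /=; by rewrite !appFE. Qed.

Lemma cf_brW D E k : cf (brW D E) k = ap D (cf E k) - ap E (cf D k).
Proof. by rewrite /cf ap_brW //; exact: laurent_XF. Qed.
Lemma cf_mulW g D k : cf (mulW g D) k = sval g * cf D k.
Proof. by rewrite /cf ap_mulW //; exact: laurent_XF. Qed.
Lemma cf_linW a D E k : cf (linW a D E) k = scK a * cf D k + cf E k.
Proof. by rewrite /cf ap_linW //; exact: laurent_XF. Qed.
Lemma cf_zeroW k : cf zeroW k = 0.
Proof. by rewrite /cf ap_zeroW //; exact: laurent_XF. Qed.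


Lemma ap_pW_frac i p m : ap (pW i) (p%:F / XF m) = dfrac i p m.
Proof.
have hu : laurent (p%:F / XF m) by apply: laurent_divX; apply: laurent_poly.
rewrite /ap (appF_mkL _ hu); exact: (@dL_spec i (mkL hu) p m erefl).
Qed.

Lemma eul_frac i p m : xv i * ap (pW i) (p%:F / XF m) = ef i p m.
Proof. by rewrite ap_pW_frac xv_dfrac. Qed.

Lemma xv_frac k : xv k = ('X_[U_(k)%MM] : P)%:F / XF 0.
Proof. by rewrite XF0 divr1. Qed.

Lemma xv_neq0 i : xv i != 0.
Proof. exact: XF_neq0. Qed.

Lemma laurent_xv i : laurent (xv i).
Proof. exact: laurent_XF. Qed.

Lemma ap_pW_x i k : ap (pW i) (xv k) = (i == k)%:R.
Proof.
have h := eul_frac i 'X_[U_(k)%MM] 0; rewrite -xv_frac /ef euX mnm0E mul0r subr0 XF0 divr1 in h.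
rewrite rmorphM rmorph_nat -/(xv k) mnm1E in h.
apply: (gf_cancel (xv_neq0 i)); rewrite h eq_sym.
by case: eqP => [->|_]; rewrite ?mul1r ?mulr1 ?mul0r ?mulr0.
Qed.

Definition zpos (z : int) : nat := match z with Posz k => k | Negz _ => 0 end.
Definition zneg (z : int) : nat := match z with Posz _ => 0 | Negz k => k.+1 end.
Lemma zposneg z : z = (zpos z)%:Z - (zneg z)%:Z.
Proof. by case: z => k /=; rewrite ?subr0 // NegzE sub0r. Qed.

Definition mpos (a : 'I_n -> int) : 'X_{1..n} := [multinom zpos (a i) | i < n].
Definition mneg (a : 'I_n -> int) : 'X_{1..n} := [multinom zneg (a i) | i < n].
Definition xz (a : 'I_n -> int) : F := XF (mpos a) / XF (mneg a).

Lemma laurent_xz a : laurent (xz a).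
Proof. exact: laurent_divX (laurent_XF _). Qed.

Lemma xz_frac a (e m : 'X_{1..n}) : (forall i, a i = (e i)%:Z - (m i)%:Z) -> xz a = XF e / XF m.
Proof.
move=> h; apply: gf_cross_inv; try exact: XF_neq0.
rewrite -!XFD; congr XF; apply/mnmP => i; rewrite !mnmDE !mnmE.
by move: (h i) (zposneg (a i)); lia.
Qed.

Lemma xz0 : xz (fun _ => 0) = 1.
Proof. by rewrite (xz_frac (e := 0%MM) (m := 0%MM)) ?XF0 ?divr1 // => i; rewrite mnm0E. Qed.

Definition addU (a : 'I_n -> int) i : 'I_n -> int := fun l => a l + (i == l)%:R.
Definition subU (a : 'I_n -> int) i : 'I_n -> int := fun l => a l - (i == l)%:R.

Lemma addU_subU a i : addU (subU a i) i = a.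
Proof. by apply: functional_extensionality => l; rewrite /addU /subU subrK. Qed.
Lemma subU_addU a i : subU (addU a i) i = a.
Proof. by apply: functional_extensionality => l; rewrite /addU /subU addrK. Qed.

Lemma xz_addU a i : xz (addU a i) = xv i * xz a.
Proof.
rewrite (xz_frac (e := (mpos a + U_(i))%MM) (m := mneg a)).
  by rewrite XFD /xz -/(xv i); ring.
move=> l; rewrite /addU mnmDE mnm1E !mnmE; have := zposneg (a l).
by case: (i == l); rewrite /= ?addn0 ?addr0 //; lia.
Qed.

Lemma eul_xz i a : xv i * ap (pW i) (xz a) = (a i)%:~R * xz a.
Proof.
rewrite /xz eul_frac /ef euX -mulrBl rmorphM rmorphB !rmorph_nat -mulrA; congr (_ * _).
rewrite !mnmE; set z := a i; rewrite [in RHS](zposneg z) rmorphB /=.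
done.
Qed.

Lemma ap_pW_xz i a : ap (pW i) (xz a) = (a i)%:~R * xz (subU a i).
Proof.
apply: (gf_cancel (xv_neq0 i)); rewrite eul_xz.
have e : xz a = xv i * xz (subU a i) by rewrite -xz_addU addU_subU.
by rewrite {1}e; ring.
Qed.


Lemma eu_coef i (p : P) (e : 'X_{1..n}) : (eu i p)@_e = (e i)%:R * p@_e.
Proof.
elim/mpolyind: p => [|c m p _ _ ih]; first by rewrite /eu mderiv0 mulr0 !mcoeff0 mulr0.
rewrite -mul_mpolyC euD euC euX !mcoeffD !mcoeffCM ih -mpolyC_nat mcoeffCM !mcoeffX.
by case: eqP => [->|_] /=; ring.
Qed.

Lemma natP_coef (k : nat) (p : P) (e : 'X_{1..n}) : ((k%:R : P) * p)@_e = k%:R * p@_e.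
Proof. by rewrite -mpolyC_nat mcoeffCM. Qed.

Lemma coefMXi (q : P) i (e : 'X_{1..n}) : (q * 'X_i)@_e = if (0 < e i)%N then q@_(e - U_(i)%MM) else 0.
Proof.
case: ifP => he.
  have ee : e = (U_(i) + (e - U_(i)))%MM.
    rewrite addmC submK //; apply/mnm_lepP => l; rewrite mnm1E.
    by case: eqP => [<-|].
  by rewrite {1}ee mcoeffMX.
elim/mpolyind: q => [|c m q _ _ ih]; first by rewrite mul0r mcoeff0.
rewrite mulrDl -scalerAl -mpolyXD mcoeffD mcoeffZ mcoeffX ih.
have -> : ((m + U_(i))%MM == e) = false.
  apply/negP => /eqP h; move: he; rewrite -h mnmDE mnm1E eqxx addn1 //.
by rewrite mulr0 addr0.
Qed.

Section Char0.
Hypothesis charK0 : [pchar K] =i pred0.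

Lemma intK_eq0 (z : int) : (z%:~R : K) = 0 -> z = 0.
Proof.
have hc := (pcharf0P K).1 charK0.
case: z => k /=.
  by move=> /eqP; rewrite [_ == _]hc => /eqP ->.
rewrite NegzE rmorphN /= => /eqP; rewrite oppr_eq0 [_ == _]hc //.
Qed.

Lemma natK_inj a b : (a%:R : K) = b%:R -> a = b.
Proof.
move=> h; have : (((a%:Z - b%:Z) : int)%:~R : K) = 0.
  by rewrite rmorphB; change ((a%:R : K) - b%:R = 0); rewrite h subrr.
by move/intK_eq0; lia.
Qed.

Lemma scK_eq0 c : scK c = 0 -> c = 0.
Proof. by rewrite /sc => /eqP; rewrite tofrac_eq0 mpolyC_eq0 => /eqP. Qed.

Lemma intF_eq0 (z : int) : (z%:~R : F) = 0 -> z = 0.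
Proof. by rewrite -sc_int => /scK_eq0/intK_eq0. Qed.

Lemma intF_mul_eq0 (z : int) (u : F) : z != 0 -> z%:~R * u = 0 -> u = 0.
Proof.
move=> hz /eqP; rewrite mulf_eq0 => /orP [/eqP/intF_eq0 h|/eqP //].
by rewrite h eqxx in hz.
Qed.

Lemma coef_eq_supp i (p : P) m e : e \in msupp p ->
  ((eu i p - (m i)%:R * p)@_e = 0) -> e i = m i.
Proof.
rewrite mcoeff_msupp => hp; rewrite mcoeffB eu_coef natP_coef -mulrBl => /eqP.
rewrite mulf_eq0 (negPf hp) orbF subr_eq0 => /eqP; exact: natK_inj.
Qed.

Lemma const_of u : laurent u -> (forall l, ap (pW l) u = 0) -> exists c, u = scK c.
Proof.
case=> p [m ->] h.
have hc : forall e l, e \in msupp p -> e l = m l.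
  move=> e l he; apply: (@coef_eq_supp l p m e he).
  have := h l; move/(congr1 (fun x => xv l * x)); rewrite eul_frac mulr0 /ef => /eqP.
  rewrite mulf_eq0 invr_eq0 (negPf (XF_neq0 m)) orbF tofrac_eq0 => /eqP ->.
  by rewrite mcoeff0.
exists (\sum_(e <- msupp p) p@_e).
rewrite {1}(mpolyE p).
have -> : \sum_(e <- msupp p) p@_e *: 'X_[e] = (\sum_(e <- msupp p) p@_e) *: ('X_[m] : P).
  rewrite scaler_suml; apply: eq_big_seq => e he; congr (_ *: 'X_[_]).
  by apply/mnmP => l; exact: hc.
by rewrite -mul_mpolyC rmorphM -/(XF m) mulfK ?XF_neq0.
Qed.

Lemma shift_eig_zero i c (j : nat) u : c != 0 -> laurent u ->
  (xv i + scK c) * ap (pW i) u = - (j.+1)%:R * u -> u = 0.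
Proof.
move=> hc0; case=> p [m ->] h.
set Q := eu i p - (m i)%:R * p.
have h1 : xv i * ap (pW i) (p%:F / XF m) = Q%:F / XF m by rewrite eul_frac.
have hF := gf_k2 (xv_neq0 i) (XF_neq0 m) h1 h.
have hQ : forall e, Q@_e = ((e i)%:R - (m i)%:R) * p@_e.
  by move=> e; rewrite mcoeffB eu_coef natP_coef mulrBl.
clearbody Q.
have hP : Q * 'X_i + c%:MP * Q = - (j.+1)%:R * (p * 'X_i).
  apply/eqP; rewrite -tofrac_eq !(rmorphD, rmorphM, rmorphN, rmorph_nat) -/(xv i).
  rewrite mulrDl /xv /XF /sc in hF; apply/eqP.
  transitivity (('X_i : P)%:F * Q%:F + (c%:MP)%:F * Q%:F); first ring.
  rewrite hF; ring.
case: (eqVneq p 0) => [->|pn0]; first by rewrite tofrac0 mul0r.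
exfalso.
have sn0 : msupp p != [::] by rewrite msupp_eq0.
have [emax hmax hmaxP] := seq_argmax (fun e : 'X_{1..n} => e i) sn0.
have [emin hmin hminP] := seq_argmin (fun e : 'X_{1..n} => e i) sn0.
have e1 : (emax i + j.+1)%N = m i.
  have := congr1 (mcoeff (U_(i) + emax)%MM) hP.
  rewrite mcoeffD mcoeffMX mcoeffCM mulNr mcoeffN natP_coef mcoeffMX !hQ.
  have -> : p@_(U_(i) + emax)%MM = 0.
    apply: memN_msupp_eq0; apply/negP => /hmaxP; rewrite mnmDE mnm1E eqxx.
    by rewrite add1n ltnn.
  rewrite mulr0 mulr0 addr0 => /eqP; rewrite -mulNr -subr_eq0 -mulrBl mulf_eq0.
  move: hmax; rewrite mcoeff_msupp => /negPf ->; rewrite orbF opprK addrAC subr_eq0 -natrD.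
  by move=> /eqP /natK_inj.
have e2 : emin i = m i.
  have := congr1 (mcoeff emin) hP.
  rewrite mcoeffD mcoeffCM mulNr mcoeffN natP_coef !coefMXi.
  have hz : forall q : P, (0 < emin i)%N -> (forall e, e \notin msupp p -> q@_e = 0) ->
      q@_(emin - U_(i))%MM = 0.
    move=> q hpos hq; apply: hq; apply/negP => /hminP; rewrite mnmBE mnm1E eqxx /=.
    by move: hpos; lia.
  have hQ0 : forall e, e \notin msupp p -> Q@_e = 0.
    by move=> e he; rewrite hQ (memN_msupp_eq0 he) mulr0.
  have hp0 : forall e, e \notin msupp p -> p@_e = 0 by move=> e /memN_msupp_eq0.
  case: ifP => hpos; rewrite ?(hz Q hpos hQ0) ?(hz p hpos hp0) ?mulr0 ?add0r ?oppr0 => /eqP;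
    rewrite mulf_eq0 (negPf hc0) /= hQ mulf_eq0; move: hmin; rewrite mcoeff_msupp => /negPf ->;
    rewrite orbF subr_eq0 => /eqP; exact: natK_inj.
have := hmaxP emin hmin; rewrite e2 -e1; lia.
Qed.

End Char0.


Lemma cf_pW i k : cf (pW i) k = (i == k)%:R.
Proof. exact: ap_pW_x. Qed.

Lemma laurent_b (b : bool) : laurent (b%:R : F).
Proof. exact: laurent_nat. Qed.

Lemma ap_mulb D u (b : bool) : laurent u -> ap D (u * b%:R) = ap D u * b%:R.
Proof. by move=> hu; rewrite mulrC apZnat // mulrC. Qed.

Lemma ap_b D (b : bool) : ap D (b%:R) = 0.
Proof. exact: apnat. Qed.

Definition Hx i : WW := mulW (mkL (laurent_xv i)) (pW i).
Definition Fx i : WW := mulW (mkL (laurentM (laurent_xv i) (laurent_xv i))) (pW i).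
Definition Gx i : WW := mulW (mkL (laurent_divX U_(i)%MM laurent1)) (pW i).
Definition Mx a j : WW := mulW (mkL (laurent_xz a)) (pW j).

Lemma cf_Hx i k : cf (Hx i) k = xv i * (i == k)%:R.
Proof. by rewrite cf_mulW cf_pW. Qed.
Lemma cf_Fx i k : cf (Fx i) k = xv i * xv i * (i == k)%:R.
Proof. by rewrite cf_mulW cf_pW. Qed.
Lemma cf_Gx i k : cf (Gx i) k = 1 / xv i * (i == k)%:R.
Proof. by rewrite cf_mulW cf_pW. Qed.
Lemma cf_Mx a j k : cf (Mx a j) k = xz a * (j == k)%:R.
Proof. by rewrite cf_mulW cf_pW. Qed.

Lemma ap_Hx i u : laurent u -> ap (Hx i) u = xv i * ap (pW i) u.
Proof. exact: ap_mulW. Qed.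
Lemma ap_Fx i u : laurent u -> ap (Fx i) u = xv i * xv i * ap (pW i) u.
Proof. exact: ap_mulW. Qed.
Lemma ap_Gx i u : laurent u -> ap (Gx i) u = 1 / xv i * ap (pW i) u.
Proof. exact: ap_mulW. Qed.
Lemma ap_Mx a j u : laurent u -> ap (Mx a j) u = xz a * ap (pW j) u.
Proof. exact: ap_mulW. Qed.

Lemma ap_xx D i : ap D (xv i * xv i) = 2%:R * xv i * ap D (xv i).
Proof. by rewrite (apM _ (laurent_xv i) (laurent_xv i)); ring. Qed.

Lemma eul_inv i : xv i * ap (pW i) (1 / xv i) = - (1 / xv i).
Proof.
have hl : laurent (1 / xv i) by apply: laurent_divX; exact: laurent1.
have := apM (pW i) (laurent_xv i) hl.
rewrite mul1r divff ?xv_neq0 // ap1 ap_pW_x eqxx mul1r => /eqP.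
by rewrite eq_sym addr_eq0 => /eqP.
Qed.


Lemma ap_mulb_x D i (b : bool) : ap D (xv i * b%:R) = ap D (xv i) * b%:R.
Proof. exact: (ap_mulb _ _ (laurent_xv _)). Qed.
Lemma ap_mulb_xx D i (b : bool) : ap D (xv i * xv i * b%:R) = ap D (xv i * xv i) * b%:R.
Proof. exact: (ap_mulb _ _ (laurentM (laurent_xv _) (laurent_xv _))). Qed.
Lemma ap_Hx_x i k : ap (Hx i) (xv k) = xv i * (i == k)%:R.
Proof. by rewrite (ap_Hx _ (laurent_xv _)) ap_pW_x. Qed.
Lemma ap_Fx_x i k : ap (Fx i) (xv k) = xv i * xv i * (i == k)%:R.
Proof. by rewrite (ap_Fx _ (laurent_xv _)) ap_pW_x. Qed.
Lemma ap_Gx_x i k : ap (Gx i) (xv k) = 1 / xv i * (i == k)%:R.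
Proof. by rewrite (ap_Gx _ (laurent_xv _)) ap_pW_x. Qed.

Lemma B1 i : brW (pW i) (Hx i) = pW i.
Proof.
apply: Wx_eq => k; rewrite cf_brW cf_Hx cf_pW ap_mulb_x ap_b ap_pW_x eqxx /=; ring.
Qed.

Lemma B2 (l i : 'I_n) : l != i -> brW (pW l) (Hx i) = zeroW.
Proof.
move=> h; apply: Wx_eq => k; rewrite cf_brW cf_Hx cf_pW ap_mulb_x ap_b ap_pW_x (negPf h) cf_zeroW /=; ring.
Qed.

Lemma B3 (i l : 'I_n) : i != l -> brW (Hx i) (Hx l) = zeroW.
Proof.
move=> h; apply: Wx_eq => k; rewrite cf_brW !cf_Hx !ap_mulb_x !ap_Hx_x.
by rewrite (negPf h) [l == i]eq_sym (negPf h) cf_zeroW /=; ring.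
Qed.

Lemma B4 i : brW (Hx i) (Gx i) = linW (- 2%:R) (Gx i) zeroW.
Proof.
have hl : laurent (1 / xv i) by apply: laurent_divX; exact: laurent1.
apply: Wx_eq => k; rewrite cf_brW cf_Hx cf_Gx cf_linW cf_Gx cf_zeroW.
rewrite (ap_mulb _ _ hl) ap_mulb_x (ap_Hx _ hl) ap_Gx_x eul_inv eqxx /=.
rewrite /sc rmorphN rmorph_nat rmorphN rmorph_nat.
have hx := xv_neq0 i.
ring.
Qed.

Lemma B5 i : brW (pW i) (Fx i) = linW 2%:R (Hx i) zeroW.
Proof.
apply: Wx_eq => k; rewrite cf_brW cf_Fx cf_pW cf_linW cf_Hx cf_zeroW.
rewrite ap_mulb_xx ap_b ap_xx ap_pW_x eqxx sc_nat /=.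
ring.
Qed.

Lemma B6 (l i : 'I_n) : l != i -> brW (pW l) (Fx i) = zeroW.
Proof.
move=> h; apply: Wx_eq => k; rewrite cf_brW cf_Fx cf_pW cf_zeroW.
rewrite ap_mulb_xx ap_b ap_xx ap_pW_x (negPf h) /=.
ring.
Qed.

Lemma B7 i : brW (Hx i) (Fx i) = Fx i.
Proof.
apply: Wx_eq => k; rewrite cf_brW cf_Fx cf_Hx.
rewrite ap_mulb_xx ap_mulb_x ap_xx ap_Hx_x ap_Fx_x eqxx /=.
ring.
Qed.


Lemma ap_Mx_x a j k : ap (Mx a j) (xv k) = xz a * (j == k)%:R.
Proof. by rewrite (ap_Mx _ _ (laurent_xv _)) ap_pW_x. Qed.

Lemma B8 i a j : brW (Hx i) (Mx a j) = linW ((a i - (i == j)%:Z)%:~R) (Mx a j) zeroW.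
Proof.
apply: Wx_eq => k; rewrite cf_brW cf_Mx cf_Hx cf_linW cf_Mx cf_zeroW.
rewrite (ap_mulb _ _ (laurent_xz a)) ap_mulb_x (ap_Hx _ (laurent_xz a)) eul_xz ap_Mx_x sc_int rmorphB /=.
case: (eqVneq i j) => [<-|ij].
  by rewrite ?eqxx /=; ring.
rewrite ?(negPf ij) ?[j == i]eq_sym ?(negPf ij) /=; ring.
Qed.

Lemma B9 i a j : brW (pW i) (Mx a j) = linW ((a i)%:~R) (Mx (subU a i) j) zeroW.
Proof.
apply: Wx_eq => k; rewrite cf_brW cf_Mx cf_pW cf_linW cf_Mx cf_zeroW.
rewrite (ap_mulb _ _ (laurent_xz a)) ap_b ap_pW_xz sc_int; ring.
Qed.

Lemma ap_Fx_xz i a : ap (Fx i) (xz a) = xv i * ((a i)%:~R * xz a).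
Proof. by rewrite (ap_Fx _ (laurent_xz a)) -mulrA eul_xz. Qed.

Lemma B10 i a j : brW (Fx i) (Mx a j) = linW ((a i - 2 * (i == j)%:Z)%:~R) (Mx (addU a i) j) zeroW.
Proof.
apply: Wx_eq => k; rewrite cf_brW cf_Mx cf_Fx cf_linW cf_Mx cf_zeroW.
rewrite (ap_mulb _ _ (laurent_xz a)) ap_mulb_xx ap_Fx_xz.
rewrite ap_xx ap_Mx_x sc_int rmorphB rmorphM xz_addU /=.
case: (eqVneq i j) => [<-|ij].
  by rewrite ?eqxx /=; ring.
rewrite ?(negPf ij) ?[j == i]eq_sym ?(negPf ij) /=; ring.
Qed.



Lemma sum_absz_upd (a b : 'I_n -> int) i : (forall l, l != i -> a l = b l) ->
  (\sum_l absz (a l) + absz (b i) = \sum_l absz (b l) + absz (a i))%N.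
Proof.
move=> h; rewrite [X in (X + _)%N = _](bigD1 i) //= [X in _ = (X + _)%N](bigD1 i) //=.
rewrite (eq_bigr (fun l => absz (b l))); first by lia.
by move=> l /h ->.
Qed.

Lemma xz_ind (h : ('I_n -> int) -> F) : h (fun _ => 0) = 1 ->
  (forall a i, h (addU a i) = xv i * h a) -> forall a, h a = xz a.
Proof.
move=> h0 hS.
suff: forall N a, (\sum_l absz (a l) <= N)%N -> h a = xz a by move=> H a; exact: H _ a (leqnn _).
elim=> [|N ih] a hN.
  have -> : a = (fun _ => 0).
    apply: functional_extensionality => l; apply/eqP; rewrite -absz_eq0 -leqn0.
    by apply: leq_trans hN; rewrite (bigD1 l) //=; exact: leq_addr.
  by rewrite h0 xz0.
case: (pickP (fun l => a l != 0)) => [i hi|none]; last first.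
  have -> : a = (fun _ => 0).
    by apply: functional_extensionality => l; move: (none l) => /negbFE /eqP.
  by rewrite h0 xz0.
case: (Order.TotalTheory.ltgtP (a i) 0) => hai; last by rewrite hai eqxx in hi.
-
  set b := addU a i.
  have hb : (\sum_l absz (b l) <= N)%N.
    have E : (\sum_l absz (a l) + absz (b i) = \sum_l absz (b l) + absz (a i))%N.
      by apply: sum_absz_upd => l /negPf; rewrite /b /addU eq_sym => ->; rewrite addr0.
    move: E hN hai; rewrite /b /addU eqxx /=; lia.
  have e := ih b hb; rewrite /b hS xz_addU in e.
  exact: (gf_cancel (xv_neq0 i) e).
-
  set b := subU a i.
  have hb : (\sum_l absz (b l) <= N)%N.
    have E : (\sum_l absz (a l) + absz (b i) = \sum_l absz (b l) + absz (a i))%N.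
      by apply: sum_absz_upd => l /negPf; rewrite /b /subU eq_sym => ->; rewrite subr0.
    move: E hN hai; rewrite /b /subU eqxx /=; lia.
  by rewrite -(addU_subU a i) hS xz_addU -/b (ih b hb).
Qed.

Section Sigma.
Hypothesis charK0 : [pchar K] =i pred0.
Variable s : WW -> WW.
Hypothesis hs : lie_aut s.
Hypothesis hpartial : forall (i : 'I_n) (D : WW), is_partial i D -> s D = D.

Lemma s_pW i : s (pW i) = pW i.
Proof. exact: hpartial (pW_partial i). Qed.

Lemma s_lin a D E : s (linW a D E) = linW a (s D) (s E).
Proof. apply: W_eq => f; by have := hs.2.1 a D E (linW a D E) (linW_lc a D E) f. Qed.

Lemma s_br D E : s (brW D E) = brW (s D) (s E).
Proof.
apply: W_eq => f; have := hs.2.2 D E (brW D E) (brW_br D E) f => ->.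
by rewrite /= !appFE.
Qed.

Lemma s_zero : s zeroW = zeroW.
Proof.
have e : zeroW = linW 1 zeroW zeroW by apply: W_eq => f /=; rewrite sc1 mul1r addr0.
have h := s_lin 1 zeroW zeroW; rewrite -e in h.
apply: W_eq => f; have := congr1 (fun D => sval (sval D f)) h => /=.
rewrite sc1 mul1r => h2.
by apply: (@addrI _ (sval (sval (s zeroW) f))); rewrite addr0 -h2.
Qed.

Lemma s_inj : injective s.
Proof. exact: bij_inj hs.1. Qed.

Lemma fix_br X D : s X = X -> s (brW X D) = brW X (s D).
Proof. by move=> h; rewrite s_br h. Qed.

Lemma deriv_const D E : (forall l, brW (pW l) D = brW (pW l) E) ->
  forall k, exists c, cf D k = cf E k + scK c.
Proof.
move=> h k.
have hl : laurent (cf D k - cf E k) by apply: laurentB; exact: ap_laurent.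
have [c hc] : exists c, cf D k - cf E k = scK c.
  apply: const_of => // l.
  have := congr1 (fun X => cf X k) (h l); rewrite /= !cf_brW !cf_pW !ap_b !subr0 => e.
  by rewrite (apB _ (ap_laurent _ _) (ap_laurent _ _)) e subrr.
by exists c; rewrite -hc addrC subrK.
Qed.

Lemma sH_cf i k : exists c, cf (s (Hx i)) k = xv i * (i == k)%:R + scK c.
Proof.
rewrite -cf_Hx; apply: deriv_const => l.
rewrite -(fix_br _ (s_pW l)).
case: (eqVneq l i) => [->|li]; first by rewrite B1 s_pW.
by rewrite (B2 li) s_zero.
Qed.

Lemma sH_off (i k : 'I_n) : i != k -> cf (s (Hx i)) k = 0.
Proof.
move=> ik.
have h : brW (s (Hx i)) (s (Hx k)) = zeroW by rewrite -s_br (B3 ik) s_zero.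
have := congr1 (fun X => cf X k) h; rewrite /= cf_brW cf_zeroW.
have [c1 h1] := sH_cf k k; have [c2 h2] := sH_cf i k.
rewrite eqxx mulr1 in h1; rewrite (negPf ik) mulr0 add0r in h2.
rewrite h1 (apD _ (laurent_xv _) (laurent_sc _)) apC addr0.
change (ap (s (Hx i)) (xv k)) with (cf (s (Hx i)) k).
by rewrite h2 apC subr0.
Qed.

Lemma sH_form i : exists c, s (Hx i) = mulW (mkL (laurentD (laurent_xv i) (laurent_sc c))) (pW i).
Proof.
have [c hc] := sH_cf i i; exists c.
apply: Wx_eq => k; rewrite cf_mulW cf_pW /=.
case: (eqVneq i k) => [<-|ik]; first by rewrite hc eqxx /= !mulr1.
by rewrite sH_off // mulr0.
Qed.

Lemma inv_xv_neq0 i : 1 / xv i != 0.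
Proof. by rewrite div1r invr_eq0 xv_neq0. Qed.

Lemma sH_fix i : s (Hx i) = Hx i.
Proof.
have [c hc] := sH_form i.
case: (eqVneq c 0) => [c0|cn0].
  rewrite hc c0; apply: Wx_eq => k; rewrite !cf_mulW /= /sc mpolyC0 tofrac0 addr0 //.
exfalso.
set G := s (Gx i).
have hG : brW (s (Hx i)) G = linW (- 2%:R) G zeroW by rewrite -s_br B4 s_lin s_zero.
have gk0 : forall k, cf G k = 0.
  move=> k; have := congr1 (fun D => cf D k) hG; rewrite /= cf_brW cf_linW cf_zeroW hc.
  rewrite (ap_mulW _ _ (ap_laurent _ _)) cf_mulW cf_pW /=.
  have hg := ap_laurent G (xv k).
  rewrite scN sc_nat addr0.
  case: (eqVneq i k) => [<-|ik].
    rewrite mulr1 (apD _ (laurent_xv _) (laurent_sc _)) apC addr0 -/(cf G i) => e.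
    apply: (shift_eig_zero charK0 (i := i) (u := cf G i) (j := 0) cn0 (ap_laurent _ _)).
    rewrite -[X in X = _](subrK (cf G i)) e; ring.
  rewrite mulr0 ap0 subr0 => e.
  apply: (shift_eig_zero charK0 (i := i) (u := cf G k) (j := 1) cn0 (ap_laurent _ _)).
  exact: e.
have : G = zeroW by apply: Wx_eq => k; rewrite gk0 cf_zeroW.
rewrite /G -s_zero => /s_inj hG0.
have := congr1 (fun D => cf D i) hG0; rewrite /= cf_Gx cf_zeroW eqxx mulr1 => /eqP.
by rewrite (negPf (inv_xv_neq0 i)).
Qed.

Lemma sF_fix i : s (Fx i) = Fx i.
Proof.
have hd : forall k, exists d, cf (s (Fx i)) k = cf (Fx i) k + scK d.
  apply: deriv_const => l; rewrite -(fix_br _ (s_pW l)).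
  case: (eqVneq l i) => [->|li]; first by rewrite B5 s_lin sH_fix s_zero.
  by rewrite (B6 li) s_zero.
have h7 : brW (Hx i) (s (Fx i)) = s (Fx i) by rewrite -(fix_br _ (sH_fix i)) B7.
have key : forall k d, cf (s (Fx i)) k = cf (Fx i) k + scK d ->
    forall di, cf (s (Fx i)) i = cf (Fx i) i + scK di ->
    - (scK di * (i == k)%:R) = scK d.
  move=> k d hk di hi.
  have := congr1 (fun D => cf D k) h7; rewrite /= cf_brW.
  rewrite hk cf_Fx (apD _ (laurentM (laurentM (laurent_xv _) (laurent_xv _)) (laurent_b _)) (laurent_sc _)).
  rewrite apC addr0 ap_mulb_xx ap_xx ap_Hx_x eqxx cf_Hx ap_mulb_x -/(cf (s (Fx i)) i) hi cf_Fx eqxx /=.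
  move=> e.
  have e2 : (2%:R * xv i * (xv i * 1) * (i == k)%:R - (xv i * xv i * 1 + scK di) * (i == k)%:R)
     - (xv i * xv i * (i == k)%:R + scK d) = 0 by rewrite e subrr.
  apply/eqP; rewrite -subr_eq0 -e2; apply/eqP; ring.
have [di hi] := hd i.
have di0 : scK di = 0.
  have h := key i di hi di hi; rewrite eqxx mulr1 in h.
  apply: (@intF_mul_eq0 charK0 2) => //.
  by rewrite -[(2%:Z)%:~R]/(2%:R : F) mulr_natl mulr2n -{1}h addNr.
apply: Wx_eq => k; have [d hk] := hd k.
rewrite hk; have := key k d hk di hi; rewrite di0 mul0r oppr0 => <-; rewrite addr0 //.
Qed.


Section Mono.
Variable j : 'I_n.
Local Notation E a := (s (Mx a j)).

Lemma sB8 i a : brW (Hx i) (E a) = linW ((a i - (i == j)%:Z)%:~R) (E a) zeroW.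
Proof. by rewrite -(fix_br _ (sH_fix i)) B8 s_lin s_zero. Qed.
Lemma sB9 i a : brW (pW i) (E a) = linW ((a i)%:~R) (E (subU a i)) zeroW.
Proof. by rewrite -(fix_br _ (s_pW i)) B9 s_lin s_zero. Qed.
Lemma sB10 i a : brW (Fx i) (E a) = linW ((a i - 2 * (i == j)%:Z)%:~R) (E (addU a i)) zeroW.
Proof. by rewrite -(fix_br _ (sF_fix i)) B10 s_lin s_zero. Qed.

Lemma R_H i a k : xv i * ap (pW i) (cf (E a) k) - cf (E a) i * (i == k)%:R
   = (a i - (i == j)%:Z)%:~R * cf (E a) k.
Proof.
have := congr1 (fun D => cf D k) (sB8 i a); rewrite /= cf_brW cf_linW cf_zeroW addr0 sc_int.
by rewrite (ap_Hx _ (ap_laurent _ _)) cf_Hx ap_mulb_x.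
Qed.

Lemma R_P i a k : ap (pW i) (cf (E a) k) = (a i)%:~R * cf (E (subU a i)) k.
Proof.
have := congr1 (fun D => cf D k) (sB9 i a); rewrite /= cf_brW cf_linW cf_zeroW addr0 sc_int.
by rewrite cf_pW ap_b subr0.
Qed.

Lemma R_F i a k : xv i * xv i * ap (pW i) (cf (E a) k) - 2%:R * xv i * cf (E a) i * (i == k)%:R
   = (a i - 2 * (i == j)%:Z)%:~R * cf (E (addU a i)) k.
Proof.
have := congr1 (fun D => cf D k) (sB10 i a); rewrite /= cf_brW cf_linW cf_zeroW addr0 sc_int.
by rewrite (ap_Fx _ (ap_laurent _ _)) cf_Fx ap_mulb_xx ap_xx.
Qed.

Lemma offdiag a (k : 'I_n) : k != j -> cf (E a) k = 0.
Proof.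
move=> kj.
set g := cf (E a) k; set g' := cf (E (subU a j)) k.
set dg := ap (pW j) g; set ddg := ap (pW j) dg; set dg' := ap (pW j) g'.
set al : F := (a j)%:~R.
have R1 : xv j * dg = (al - 1) * g.
  have := R_H j a k; rewrite eqxx [j == k]eq_sym (negPf kj) mulr0 subr0 => ->.
  by rewrite rmorphB /= rmorph1.
have R2 : dg = al * g' by exact: R_P.
have R3 : xv j * xv j * dg' = (al - 1 - 2%:R) * g.
  have := R_F j (subU a j) k; rewrite [j == k]eq_sym (negPf kj) mulr0 subr0 addU_subU => ->.
  by rewrite eqxx /subU eqxx !rmorphB rmorphM /= mulr1.
have R4 : ap (pW j) (xv j * dg) = xv j * ddg + dg.
  by rewrite (apM _ (laurent_xv _) (ap_laurent _ _)) ap_pW_x eqxx mul1r.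
have R5 : ap (pW j) (xv j * dg) = (al - 1) * dg.
  rewrite R1; have -> : al - 1 = ((a j - 1)%:~R : F) by rewrite rmorphB.
  by rewrite (apZint _ _ (ap_laurent _ _)).
have R6 : ddg = al * dg'.
  by rewrite /ddg R2 (apZint _ _ (ap_laurent _ _)).
apply: (@intF_mul_eq0 charK0 2) => //.
transitivity (xv j * ((al - 1) * dg - (xv j * ddg + dg)) + xv j * xv j * (ddg - al * dg')
   - (al - 2%:R) * (xv j * dg - (al - 1) * g) + al * (xv j * xv j * dg' - (al - 1 - 2%:R) * g)).
  rewrite -[(2%:Z)%:~R]/(2%:R : F); ring.
by rewrite -R5 R4 R6 R1 R3 !subrr !mulr0 subr0 !addr0.
Qed.

Definition hh a := cf (E a) j.

Lemma cfEi_delta a i : cf (E a) i * (i == j)%:R = hh a * (i == j)%:R.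
Proof. by case: (eqVneq i j) => [->|ij] /=; rewrite ?mulr0. Qed.

Lemma HB1 i a : xv i * ap (pW i) (hh a) = (a i)%:~R * hh a.
Proof.
have := R_H i a j; rewrite cfEi_delta => e.
apply/eqP; rewrite -subr_eq0; apply/eqP.
have -> : xv i * ap (pW i) (hh a) - (a i)%:~R * hh a =
   (xv i * ap (pW i) (cf (E a) j) - hh a * (i == j)%:R) - (a i - (i == j)%:Z)%:~R * cf (E a) j.
  rewrite rmorphB /=; rewrite -[((i == j)%:Z)%:~R]/((i == j)%:R : F); rewrite /hh; ring.
by rewrite e subrr.
Qed.

Lemma HB2 i a : ap (pW i) (hh a) = (a i)%:~R * hh (subU a i).
Proof. exact: R_P. Qed.

Lemma HB3 i a : xv i * xv i * ap (pW i) (hh a) - 2%:R * xv i * hh a * (i == j)%:R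
   = (a i - 2 * (i == j)%:Z)%:~R * hh (addU a i).
Proof. by rewrite -R_F -!mulrA cfEi_delta. Qed.

Lemma hh_step a i : hh (addU a i) = xv i * hh a.
Proof.
set a' := addU a i.
have ha' : a' i = a i + 1 by rewrite /a' /addU eqxx.
case: (eqVneq (a i + 1) 0) => [hm1|hnz].
  have h3 := HB3 i a.
  rewrite -mulrA HB1 in h3.
  set z : int := a i - 2 * (i == j)%:Z.
  have zn0 : z != 0.
    rewrite /z; have : a i = -1 by apply/eqP; rewrite -(subr_eq0) opprK; apply/eqP.
    by move=> ->; case: (i == j).
  apply/eqP; rewrite -subr_eq0; apply/eqP; apply: (@intF_mul_eq0 charK0 z) => //.
  rewrite mulrBr -h3 rmorphB rmorphM /=.
  rewrite -[((i == j)%:Z)%:~R]/((i == j)%:R : F) -[(2%:Z)%:~R]/(2%:R : F); ring.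
have h1 := HB1 i a'; have h2 := HB2 i a'.
rewrite /a' subU_addU -/a' ha' in h2; rewrite ha' in h1.
apply/eqP; rewrite -subr_eq0; apply/eqP; apply: (@intF_mul_eq0 charK0 (a i + 1)) => //.
by rewrite mulrBr -h1 h2 mulrCA subrr.
Qed.

Lemma Mx0 : Mx (fun _ => 0) j = pW j.
Proof. by apply: Wx_eq => k; rewrite cf_Mx xz0 mul1r cf_pW. Qed.

Lemma mono_fix a : s (Mx a j) = Mx a j.
Proof.
have h0 : hh (fun _ => 0) = 1 by rewrite /hh Mx0 s_pW cf_pW eqxx.
have hall := xz_ind h0 hh_step.
apply: Wx_eq => k; rewrite cf_Mx.
case: (eqVneq k j) => [->|kj]; first by rewrite ?eqxx /= mulr1 -(hall a).
by rewrite offdiag //= ?mulr0.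
Qed.

End Mono.


Lemma mulW_poly_fix k m (p : P) :
  s (mulW (mkL (laurent_divX m (laurent_poly p))) (pW k))
  = mulW (mkL (laurent_divX m (laurent_poly p))) (pW k).
Proof.
elim/mpolyind: p => [|c e p _ _ ih].
  have -> : mulW (mkL (laurent_divX m (laurent_poly 0))) (pW k) = zeroW.
    by apply: WF_eq => u hu; rewrite ap_mulW // ap_zeroW //= tofrac0 !mul0r.
  exact: s_zero.
set a := fun l => (e l)%:Z - (m l)%:Z.
have -> : mulW (mkL (laurent_divX m (laurent_poly (c *: 'X_[e] + p)))) (pW k)
  = linW c (Mx a k) (mulW (mkL (laurent_divX m (laurent_poly p))) (pW k)).
  apply: WF_eq => u hu; rewrite ap_mulW // ap_linW // ap_Mx // ap_mulW //=.
  rewrite (xz_frac (e := e) (m := m)) // -mul_mpolyC rmorphD rmorphM /sc -/(XF e).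
  ring.
by rewrite s_lin mono_fix ih.
Qed.

Lemma mulW_fix k (g : L) : s (mulW g (pW k)) = mulW g (pW k).
Proof.
case: (svalP g) => p [m hm].
have -> : g = mkL (laurent_divX m (laurent_poly p)) by apply: L_eq.
exact: mulW_poly_fix.
Qed.

Lemma all_fix_r r : forall D, (forall k : 'I_n, (r <= k)%N -> cf D k = 0) -> s D = D.
Proof.
elim: r => [|r ih] D hD.
  have -> : D = zeroW by apply: Wx_eq => k; rewrite hD // cf_zeroW.
  exact: s_zero.
case: (ltnP r n) => hr; last first.
  apply: ih => k hk; exfalso; have := ltn_ord k; lia.
set k0 := Ordinal hr.
set g := mkL (ap_laurent D (xv k0)).
set D' := linW (-1) (mulW g (pW k0)) D.
have hD' : s D' = D'.
  apply: ih => k hk; rewrite cf_linW cf_mulW cf_pW /= scN1.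
  have t1 : (true%:R : F) = 1 by []. have f0 : (false%:R : F) = 0 by [].
  change (ap D (xv k0)) with (cf D k0).
  case: (eqVneq k0 k) => [<-|ne]; first by rewrite t1 mulr1; ring.
  rewrite f0 mulr0 mulr0 add0r; apply: hD.
  have : (nat_of_ord k) <> r by move=> e; move/eqP: ne; apply; apply: val_inj.
  by move: hk; lia.
have eD : D = linW 1 (mulW g (pW k0)) D'.
  apply: Wx_eq => k; rewrite !cf_linW cf_mulW cf_pW sc1 scN1 /=.
  change (ap D (xv k0)) with (cf D k0); ring.
by rewrite eD s_lin mulW_fix hD'.
Qed.

End Sigma.
End Dev.

Unset Implicit Arguments.

Theorem proposition2p11 (K : fieldType) (n : nat)
  (charK0 : [pchar K] =i pred0)
  (s : W K n -> W K n) (hs : lie_aut s)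
  (hpartial : forall (i : 'I_n) (D : W K n), is_partial i D -> s D = D) :
  forall D : W K n, s D = D.
Proof.
move=> D; apply: (all_fix_r charK0 hs hpartial (r := n)) => k hk.
by exfalso; have := ltn_ord k; lia.
Qed.
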